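(* $E_{range}$ and $E_0$ are learn-incomparable: there is a family of structures that is $E_0$-learnable but not $E_{range}$-learnable, and there is a family of structures that is $E_{range}$-learnable but not $E_0$-learnable (for instance the family of graphs $\{\mathsf{R}_n\oplus\mathsf{I}:n\geq 2\}\cup\{\mathsf{R}\oplus\mathsf{I}\}$).
   Context: All structures are countable, have domain $\mathbb{N}$, are in a finite relational signature, and are identified with their atomic diagrams (elements of $2^{\mathbb{N}}$). A family of structures is a countable set of pairwise nonisomorphic such structures. $\mathrm{LD}(\mathfrak{K})\subseteq 2^{\mathbb{N}}$ is the set of structures with domain $\mathbb{N}$ isomorphic to a member of $\mathfrak{K}$ (subspace topology). For an equivalence relation $E$ on a space $X$, $\mathfrak{K}$ is $E$-learnable if there is a continuous $\Gamma:\mathrm{LD}(\mathfrak{K})\to X$ with $\mathcal{S}\cong\mathcal{S}'\iff\Gamma(\mathcal{S})\,E\,\Gamma(\mathcal{S}')$ for all $\mathcal{S},\mathcal{S}'\in\mathrm{LD}(\mathfrak{K})$. On Baire space $\mathbb{N}^{\mathbb{N}}$: $p\,E_0\,q\iff\exists m\,\forall n\ge m\ p(n)=q(n)$; $p\,E_{range}\,q\iff\{p(m):m\}=\{q(m):m\}$. Graphs are undirected without self-loops. $\mathsf{R}$ is the graph on $\mathbb{N}$ with edges $\{i,i+1\}$; $\mathsf{I}$ is the graph on $\mathbb{N}$ with no edges; for $n\ge2$, $\mathsf{R}_n$ is the graph on $\{0,\dots,n-1\}$ with edges $\{i,i+1\}$, $i<n-1$; $G_0\oplus G_1$ is the disjoint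 union of graphs (re-indexed to have domain $\mathbb{N}$). *)

(* Defs.v *)
From mathcomp Require Import all_boot.
Set Implicit Arguments. Unset Strict Implicit. Unset Printing Implicit Defensive.

(* A finite relational signature: the list of arities of its relation symbols. *)
Definition signature := seq nat.

(* This is exactly the information contained in the atomic diagram. *)
Definition structure (sig : signature) :=
  forall i : 'I_(size sig), (nth 0 sig i).-tuple nat -> bool.

Definition iso (sig : signature) (A B : structure sig) : Prop :=
  exists f g : nat -> nat, cancel f g /\ cancel g f /\
    forall (i : 'I_(size sig)) (t : (nth 0 sig i).-tuple nat),
      A i t = B i (map_tuple f t).

Definition is_family (sig : signature) (K : structure sig -> Prop) : Prop :=
  (exists e : nat -> structure sig, forall A, K A -> exists n, e n = A) /\
  (forall A B, K A -> K B -> iso A B -> A = B).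

Definition LD (sig : signature) (K : structure sig -> Prop) (S : structure sig) : Prop :=
  exists A, K A /\ iso S A.

Definition agree_below (sig : signature) (m : nat) (S S' : structure sig) : Prop :=
  forall (i : 'I_(size sig)) (t : (nth 0 sig i).-tuple nat),
    all (fun x => x < m) t -> S i t = S' i t.

(* Continuity of Gamma : LD(K) -> Baire space, LD(K) carrying the subspace
   topology of Cantor space (atomic diagrams): every finite prefix of the
   output is determined by a finite part of the atomic diagram of the input. *)
Definition continuous_on_LD (sig : signature) (K : structure sig -> Prop)
  (Gamma : structure sig -> nat -> nat) : Prop :=
  forall S, LD K S -> forall n, exists m, forall S', LD K S' ->
    agree_below m S S' -> forall k, k < n -> Gamma S k = Gamma S' k.

Definition learnable (E : (nat -> nat) -> (nat -> nat) -> Prop)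
  (sig : signature) (K : structure sig -> Prop) : Prop :=
  exists Gamma : structure sig -> nat -> nat,
    continuous_on_LD K Gamma /\
    forall S S', LD K S -> LD K S' -> (iso S S' <-> E (Gamma S) (Gamma S')).

Definition E0 (p q : nat -> nat) : Prop :=
  exists m, forall n, m <= n -> p n = q n.

Definition Erange (p q : nat -> nat) : Prop :=
  forall x, (exists m, p m = x) <-> (exists m, q m = x).

(* Main.v *)
Require Import Defs.
From mathcomp Require Import all_boot zify.
From Stdlib Require Import Classical ClassicalEpsilon.
Unset Printing Implicit Defensive.

Lemma map_tuple_comp n (t : n.-tuple nat) (f g : nat -> nat) :
  map_tuple g (map_tuple f t) = map_tuple (g \o f) t.
Proof. by apply: val_inj => /=; rewrite map_comp. Qed.

Lemma iso_refl {sig} (A : structure sig) : iso A A.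
Proof.
exists id, id; split => //; split => // i t.
by congr (A i _); apply: val_inj => /=; rewrite map_id.
Qed.

Lemma iso_sym {sig} {A B : structure sig} : iso A B -> iso B A.
Proof.
case=> f [g [cfg [cgf H]]]; exists g, f; split => //; split => // i t.
rewrite H map_tuple_comp; congr (B i _); apply: val_inj => /=.
by rewrite (@eq_map _ _ _ id) ?map_id // => x /=; rewrite cgf.
Qed.

Lemma iso_trans {sig} {A B C : structure sig} : iso A B -> iso B C -> iso A C.
Proof.
case=> f1 [g1 [c1 [c1' H1]]]; case=> f2 [g2 [c2 [c2' H2]]].
exists (f2 \o f1), (g1 \o g2); split; first exact: can_comp.
split; first exact: can_comp.
by move=> i t; rewrite H1 H2 map_tuple_comp.
Qed.

Definition pb {sig} (h : nat -> nat) (S : structure sig) : structure sig :=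
  fun i t => S i (map_tuple h t).

Lemma iso_pb {sig} (h h' : nat -> nat) (S : structure sig) :
  cancel h h' -> cancel h' h -> iso (pb h S) S.
Proof. by move=> c c'; exists h, h'. Qed.

Lemma agree_trans {sig} m (A B C : structure sig) :
  agree_below m A B -> agree_below m B C -> agree_below m A C.
Proof. by move=> H1 H2 i t Ht; rewrite H1 // H2. Qed.

Lemma agree_le {sig} m m' (A B : structure sig) :
  m' <= m -> agree_below m A B -> agree_below m' A B.
Proof.
move=> le H i t Ht; apply: H; apply/allP => x /(allP Ht) /= lt; lia.
Qed.

Lemma LD_iso {sig} (K : structure sig -> Prop) S A : K A -> iso S A -> LD K S.
Proof. by move=> KA H; exists A. Qed.

Definition sig1 : signature := [:: 2; 2].

Definition M x y := (x != y) && (x %/ 2 == y %/ 2).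
Definition M' x y := (0 < x) && (0 < y) && M x.-1 y.-1.

Lemma MS x y : M x.+1 y.+1 = M' x y.
Proof.
rewrite /M' /M; apply/idP/idP.
  case/andP => /eqP H1 /eqP H2; apply/andP; split; first (apply/andP; split; lia).
  apply/andP; split; [apply/eqP; lia | apply/eqP; lia].
case/andP => /andP [H0 H0'] /andP [/eqP H1 /eqP H2].
apply/andP; split; [apply/eqP; lia | apply/eqP; lia].
Qed.

Lemma M'S x y : M' x.+1 y.+1 = M x y.
Proof. by []. Qed.

Definition sel (i : nat) (R0 R1 : nat -> nat -> bool) := if i == 0 then R0 else R1.

Definition mk (R0 R1 : nat -> nat -> bool) : structure sig1 :=
  fun i t => sel i R0 R1 (nth 0 t 0) (nth 0 t 1).

Definition A0 := mk M' M.
Definition B0 := mk M M'.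

Lemma arity1 (i : 'I_(size sig1)) : nth 0 sig1 i = 2.
Proof. by case: i => [[|[|]]]. Qed.

Lemma mk_map R0 R1 (h : nat -> nat) (i : 'I_(size sig1)) (t : (nth 0 sig1 i).-tuple nat) :
  mk R0 R1 i (map_tuple h t) = sel i R0 R1 (h (nth 0 t 0)) (h (nth 0 t 1)).
Proof.
have st : size t = 2 by rewrite size_tuple arity1.
by rewrite /mk /= !(nth_map 0) // st.
Qed.

Lemma tuple_lt m (i : 'I_(size sig1)) (t : (nth 0 sig1 i).-tuple nat) :
  all (fun x => x < m) t -> nth 0 t 0 < m /\ nth 0 t 1 < m.
Proof.
have st : size t = 2 by rewrite size_tuple arity1.
move/allP => H; split; apply: H; apply: mem_nth; by rewrite st.
Qed.

Definition rot N x := if x < N then x.+1 else if x == N then 0 else x.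
Definition rotinv N y := if y == 0 then N else if y <= N then y.-1 else y.

Lemma rotK N : cancel (rot N) (rotinv N).
Proof.
move=> x; rewrite /rot /rotinv.
case: (ltngtP x N) => H.
- have -> : (x.+1 == 0) = false by [].
  by rewrite H.
  have -> : (x == 0) = false by apply/eqP; lia.
  have -> : (x <= N) = false by apply/negbTE; rewrite -ltnNge.
  done.
- by rewrite H eqxx.
Qed.

Lemma rotinvK N : cancel (rotinv N) (rot N).
Proof.
move=> y; rewrite /rot /rotinv.
case: (y =P 0) => [->|H]; first by rewrite ltnn eqxx.
case: (leqP y N) => H2.
  by case: y H H2 => // y' _ H2 /=; rewrite H2.
have -> : (y < N) = false by apply/negbTE; rewrite -leqNgt; lia.
have -> : (y == N) = false by apply/eqP; lia.
done.
Qed.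

Lemma agree_rotB N : agree_below N A0 (pb (rot N) B0).
Proof.
move=> i t /tuple_lt [H0 H1]; rewrite /pb /B0 mk_map /rot H0 H1 /A0 /mk /sel.
by case: (nat_of_ord i == 0); rewrite ?MS ?M'S.
Qed.

Lemma agree_rotA N : agree_below N B0 (pb (rot N) A0).
Proof.
move=> i t /tuple_lt [H0 H1]; rewrite /pb /A0 mk_map /rot H0 H1 /B0 /mk /sel.
by case: (nat_of_ord i == 0); rewrite ?MS ?M'S.
Qed.

Definition e0 : 'I_(size sig1) := @Ordinal 2 0 isT.
Definition e1 : 'I_(size sig1) := @Ordinal 2 1 isT.
Definition relE (S : structure sig1) x y := S e0 [tuple x; y].
Definition relF (S : structure sig1) x y := S e1 [tuple x; y].

Definition pm a := if a %% 2 == 1 then a.-1 else a.+1.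
Lemma Mpm a : M a (pm a).
Proof.
rewrite /M /pm; case: ifP => /eqP H; apply/andP; split; apply/eqP; lia.
Qed.
Lemma Mpm' a : M' a (pm a.-1).+1.
Proof. case: a => [|a] /=; rewrite ?M'S ?Mpm //. Abort.

Lemma iso_rel {S R0 R1} : iso S (mk R0 R1) ->
  exists f g : nat -> nat, cancel f g /\ cancel g f /\
   (forall x y, relE S x y = R0 (f x) (f y)) /\ (forall x y, relF S x y = R1 (f x) (f y)).
Proof.
case=> f [g [c1 [c2 H]]]; exists f, g; do 2 split => //.
by split => x y; rewrite /relE /relF H.
Qed.

Lemma M'0 y : M' 0 y = false. Proof. by []. Qed.
Lemma M'all x : exists y, M' x y.
Proof. exists (pm x.-1).+1. case: x => [|x] /=. rewrite /M' /= . Abort.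

Lemma iso_A0 {S} : iso S A0 ->
  (exists w, forall y, ~~ relE S w y) /\ (forall x, exists y, relF S x y).
Proof.
case/iso_rel => f [g [c1 [c2 [HE HF]]]]; split.
  by exists (g 0) => y; rewrite HE c2.
by move=> x; exists (g (pm (f x))); rewrite HF c2 Mpm.
Qed.

Lemma iso_B0 {S} : iso S B0 ->
  (exists w, forall y, ~~ relF S w y) /\ (forall x, exists y, relE S x y).
Proof.
case/iso_rel => f [g [c1 [c2 [HE HF]]]]; split.
  by exists (g 0) => y; rewrite HF c2.
by move=> x; exists (g (pm (f x))); rewrite HE c2 Mpm.
Qed.

Lemma noA0B0 : ~ iso A0 B0.
Proof.
move=> H; case: (iso_A0 (iso_refl A0)) => [[w Hw] _].
case: (iso_B0 H) => _ /(_ w) [y]; by rewrite (negbTE (Hw y)).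
Qed.

Lemma noB0A0 : ~ iso B0 A0.
Proof.
move=> H; case: (iso_A0 H) => [[w Hw] _].
case: (iso_B0 (iso_refl B0)) => _ /(_ w) [y]; by rewrite (negbTE (Hw y)).
Qed.

Lemma has_mono (R : nat -> bool) k k' : k <= k' -> has R (iota 0 k) -> has R (iota 0 k').
Proof.
move=> le /hasP [y]; rewrite mem_iota => Hy Ry; apply/hasP; exists y => //.
rewrite mem_iota; lia.
Qed.

Lemma matched {R : nat -> nat -> bool} : (forall x, exists y, R x y) ->
  forall w, exists N, forall k, N <= k -> all (fun x => has (R x) (iota 0 k)) (iota 0 w.+1).
Proof.
move=> H; elim=> [|w [N IH]].
  case: (H 0) => y Hy; exists y.+1 => k Hk /=; rewrite andbT.
  apply/hasP; exists y => //; rewrite mem_iota; lia.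
case: (H w.+1) => y Hy; exists (maxn N y.+1) => k Hk.
rewrite -addn1 iotaD all_cat IH /=; last lia.
rewrite andbT; apply/hasP; exists y => //; rewrite mem_iota; lia.
Qed.

Definition mE S k x := has (relE S x) (iota 0 k).
Definition mF S k x := has (relF S x) (iota 0 k).
Definition G1 (S : structure sig1) (k : nat) : nat :=
  has (fun x => ~~ mE S k x && all (mF S k) (iota 0 x.+1)) (iota 0 k).

Lemma G1_A {S} : iso S A0 -> exists N, forall k, N <= k -> G1 S k = 1.
Proof.
case/iso_A0 => [[w Hw] HF]; case: (matched HF w) => N HN.
exists (maxn N w.+1) => k Hk; rewrite /G1; apply/eqP; rewrite eqb1.
apply/hasP; exists w; first by rewrite mem_iota; lia.
rewrite HN; last lia.
by rewrite andbT /mE; apply/hasPn => y _.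
Qed.

Lemma G1_B {S} : iso S B0 -> exists N, forall k, N <= k -> G1 S k = 0.
Proof.
case/iso_B0 => [[w Hw] HE]; case: (matched HE w) => N HN.
exists N => k Hk; rewrite /G1; apply/eqP; rewrite eqb0.
apply/hasPn => x Hx; rewrite negb_and; case: (leqP x w) => Hxw.
  apply/orP; left; rewrite negbK.
  by apply: (allP (HN k Hk)); rewrite mem_iota; lia.
apply/orP; right; apply/allPn; exists w; first by rewrite mem_iota; lia.
by rewrite /mF; apply/hasPn => y _.
Qed.

Definition K1 (A : structure sig1) : Prop := A = A0 \/ A = B0.

Lemma agree_rel {m} {S S' : structure sig1} x y : agree_below m S S' -> x < m -> y < m ->
  relE S x y = relE S' x y /\ relF S x y = relF S' x y.
Proof.
move=> H Hx Hy; split; apply: H => /=; by rewrite Hx Hy.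
Qed.

Lemma G1_cont : continuous_on_LD K1 (fun S k => G1 S k).
Proof.
move=> S _ n; exists n => S' _ Hag k Hk; congr nat_of_bool.
apply: eq_in_has => x; rewrite mem_iota => Hx.
congr (~~ _ && _).
  apply: eq_in_has => y; rewrite mem_iota => Hy.
  by case: (agree_rel x y Hag ltac:(lia) ltac:(lia)).
apply: eq_in_all => z; rewrite mem_iota => Hz; apply: eq_in_has => y; rewrite mem_iota => Hy.
by case: (agree_rel z y Hag ltac:(lia) ltac:(lia)).
Qed.

Lemma K1_class {S} : LD K1 S ->
  (iso S A0 /\ exists N, forall k, N <= k -> G1 S k = 1) \/
  (iso S B0 /\ exists N, forall k, N <= k -> G1 S k = 0).
Proof.
case=> A [[->|->] H]; [left | right]; split => //; [exact: G1_A | exact: G1_B].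
Qed.

Lemma K1_learn : learnable E0 K1.
Proof.
exists (fun S k => G1 S k); split; first exact: G1_cont.
move=> S S' HS HS'.
case: (K1_class HS) => [[HA [N HN]]|[HA [N HN]]];
case: (K1_class HS') => [[HA' [N' HN']]|[HA' [N' HN']]]; split.
- move=> _; exists (maxn N N') => n Hn; rewrite HN ?HN'; lia.
- move=> _; exact: (iso_trans HA (iso_sym HA')).
- move=> H; exfalso; apply: noA0B0; exact: iso_trans (iso_sym HA) (iso_trans H HA').
- case=> m Hm; exfalso; have := Hm (maxn m (maxn N N')).
  rewrite HN ?HN'; lia.
- move=> H; exfalso; apply: noB0A0; exact: iso_trans (iso_sym HA) (iso_trans H HA').
- case=> m Hm; exfalso; have := Hm (maxn m (maxn N N')).
  rewrite HN ?HN'; lia.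
- move=> _; exists (maxn N N') => n Hn; rewrite HN ?HN'; lia.
- move=> _; exact: (iso_trans HA (iso_sym HA')).
Qed.

Lemma K1_family : is_family K1.
Proof.
split.
  exists (fun n => if n == 0 then A0 else B0) => A [->|->]; by [exists 0 | exists 1].
move=> A B [->|->] [->|->] H //; exfalso; [exact: noA0B0 H | exact: noB0A0 H].
Qed.

Lemma K1_notErange : ~ learnable Erange K1.
Proof.
case=> G [Hc HG].
have LA : LD K1 A0 by exists A0; split; [left | exact: iso_refl].
have LB : LD K1 B0 by exists B0; split; [right | exact: iso_refl].
have nE : ~ Erange (G A0) (G B0) by move/(HG _ _ LA LB); exact: noA0B0.
have [x Hx] : exists x, ~ ((exists m, G A0 m = x) <-> (exists m, G B0 m = x)).
  by apply: not_all_ex_not.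
have key : forall X Y, LD K1 X -> LD K1 Y -> (forall N, agree_below N X (pb (rot N) Y)) ->
    (forall N, LD K1 (pb (rot N) Y)) ->
    (forall m, exists m', G Y m' = G X m).
  move=> X Y LX LY Hag LP m; case: (Hc X LX m.+1) => L HL.
  have := HL _ (LP L) (Hag L) m (ltnSn m) => ->.
  have : iso (pb (rot L) Y) Y by apply: iso_pb; [exact: rotK | exact: rotinvK].
  move/(HG _ _ (LP L) LY) => /(_ (G (pb (rot L) Y) m)) [H _].
  by apply: H; exists m.
have LPB : forall N, LD K1 (pb (rot N) B0).
  move=> N; exists B0; split; [by right | apply: iso_pb; [exact: rotK|exact: rotinvK]].
have LPA : forall N, LD K1 (pb (rot N) A0).
  move=> N; exists A0; split; [by left | apply: iso_pb; [exact: rotK|exact: rotinvK]].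
apply: Hx; split.
  case=> m <-; exact: (key _ _ LA LB agree_rotB LPB).
case=> m <-; exact: (key _ _ LB LA agree_rotA LPA).
Qed.

Definition sig2 : signature := [:: 1].
Definition mkU (P : nat -> bool) : structure sig2 := fun i t => P (nth 0 t 0).
Definition u0 : 'I_(size sig2) := @Ordinal 1 0 isT.
Definition rel1 (S : structure sig2) x := S u0 [tuple x].
Definition cnt (R : nat -> bool) k := count R (iota 0 k).
Definition Big (R : nat -> bool) j := exists k, j <= cnt R k.

Lemma cntS R k : cnt R k.+1 = cnt R k + R k.
Proof. by rewrite /cnt -addn1 iotaD count_cat /= addn0. Qed.

Lemma cnt_mono R k k' : k <= k' -> cnt R k <= cnt R k'.
Proof.
move=> le; rewrite /cnt -(subnKC le) iotaD count_cat; exact: leq_addr.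
Qed.

Lemma ivt R k j : j <= cnt R k -> exists k', cnt R k' = j.
Proof.
elim: k j => [|k IH] j H.
  by exists 0; move: H; rewrite /cnt /=; case: j.
move: H; rewrite cntS => H.
case: (leqP j (cnt R k)) => H2; first exact: IH.
by exists k.+1; rewrite cntS; lia.
Qed.

Lemma range_cnt R j : (exists m, cnt R m = j) <-> Big R j.
Proof.
split; first by case=> m <-; exists m.
by case=> k Hk; exact: ivt Hk.
Qed.

Lemma le_foldmax (s : seq nat) x : x \in s -> x <= foldr maxn 0 s.
Proof.
elim: s => //= y s IH; rewrite in_cons => /orP [/eqP ->|H]; first exact: leq_maxl.
by apply: leq_trans (IH H) _; exact: leq_maxr.
Qed.

Lemma cnt_transfer R P (f g : nat -> nat) : cancel f g -> (forall x, R x = P (f x)) ->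
  forall j, Big R j -> Big P j.
Proof.
move=> c H j [k Hk].
set s := map f (filter R (iota 0 k)).
exists (foldr maxn 0 s).+1.
have us : uniq s by rewrite map_inj_uniq ?filter_uniq ?iota_uniq //; exact: can_inj c.
have : size s <= cnt P (foldr maxn 0 s).+1.
  rewrite /cnt -size_filter; apply: uniq_leq_size => // y Hy.
  rewrite mem_filter mem_iota /= add0n ltnS le_foldmax // andbT.
  by move: Hy => /mapP [x]; rewrite mem_filter => /andP [Rx _] ->; rewrite -H.
by rewrite size_map size_filter; apply: leq_trans.
Qed.

Lemma rel1_mkU P x : rel1 (mkU P) x = P x.
Proof. by []. Qed.

Lemma iso_rel1 {S S' : structure sig2} : iso S S' ->
  exists f g : nat -> nat, cancel f g /\ cancel g f /\ forall x, rel1 S x = rel1 S' (f x).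
Proof.
case=> f [g [c1 [c2 H]]]; exists f, g; do 2 split => //.
move=> x; rewrite /rel1 H; congr (S' u0 _); exact: val_inj.
Qed.

Lemma iso_Big {S S' : structure sig2} : iso S S' ->
  forall j, Big (rel1 S) j <-> Big (rel1 S') j.
Proof.
case/iso_rel1 => f [g [c1 [c2 H]]] j; split; first exact: cnt_transfer c1 H j.
have H' : forall y, rel1 S' y = rel1 S (g y) by move=> y; rewrite H c2.
exact: (cnt_transfer _ _ _ _ c2 H').
Qed.

Lemma inf_Big (R : nat -> bool) : (forall N, exists x, N <= x /\ R x) -> forall j, Big R j.
Proof.
move=> H; elim=> [|j [k Hk]]; first by exists 0.
case: (H k) => x [Hx Rx]; exists x.+1; rewrite cntS Rx.
have := @cnt_mono R _ _ Hx; lia.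
Qed.

Lemma bnd_cnt (R : nat -> bool) K : (forall x, R x -> x < K) -> forall k, cnt R k <= cnt R K.
Proof.
move=> H k; apply: leq_trans (@cnt_mono R _ _ (leq_maxl k K)) _.
rewrite /cnt -(subnKC (leq_maxr k K)) iotaD count_cat.
have -> : count R (iota (0 + K) (maxn k K - K)) = 0.
  rewrite (@eq_in_count _ _ pred0) ?count_pred0 //.
  move=> x; rewrite mem_iota => /andP [Hx _] /=; apply/negbTE/negP => /H; lia.
by rewrite addn0.
Qed.

Lemma Big_lt n j : Big (fun x => x < n) j <-> j <= n.
Proof.
have Hn : cnt (fun x => x < n) n = n.
  rewrite /cnt (@eq_in_count _ _ predT) ?count_predT ?size_iota //.
  by move=> x; rewrite mem_iota.
split.
  case=> k Hk; apply: leq_trans Hk _; rewrite -{2}Hn; exact: bnd_cnt.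
by move=> H; exists n; rewrite Hn.
Qed.

Lemma Big_odd j : Big odd j.
Proof. apply: inf_Big => N; exists N.*2.+1; rewrite /= odd_double; split => //; lia. Qed.

Definition Uw := mkU odd.
Definition U n := mkU (fun x => x < n).
Definition K2 (A : structure sig2) : Prop := A = Uw \/ exists n, A = U n.

Lemma K2_inj {A B} : K2 A -> K2 B -> (forall j, Big (rel1 A) j <-> Big (rel1 B) j) -> A = B.
Proof.
move=> [->|[n ->]] [->|[m ->]] H //.
- by have := (H m.+1).1 (Big_odd _); rewrite (Big_lt m); lia.
- by have := (H n.+1).2 (Big_odd _); rewrite (Big_lt n); lia.
- have H1 := (H n).1; have H2 := (H m).2.
  rewrite /rel1 /= !Big_lt in H1 H2.
  by have -> : n = m by have := H1 (leqnn _); have := H2 (leqnn _); lia.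
Qed.

Lemma K2_family : is_family K2.
Proof.
split.
  exists (fun n => if n is n'.+1 then U n' else Uw) => A [->|[n ->]]; by [exists 0 | exists n.+1].
move=> A B KA KB H; apply: (K2_inj KA KB) => j; exact: (iso_Big H j).
Qed.

Lemma K2_learn : learnable Erange K2.
Proof.
exists (fun S k => cnt (rel1 S) k); split.
  move=> S _ n; exists n => S' _ Hag k Hk; apply: eq_in_count => x.
  rewrite mem_iota => Hx; apply: Hag => /=; rewrite andbT; lia.
move=> S S' [A [KA HA]] [A' [KA' HA']]; split.
  move=> H x; split => /range_cnt Hb; apply/range_cnt;
    [exact: (iso_Big H x).1 | exact: (iso_Big H x).2].
move=> H.
have E : A = A'.
  apply: (K2_inj KA KA') => j.
  split => Hb.
    apply/(iso_Big HA'); apply/range_cnt; apply/(H j); apply/range_cnt; exact/(iso_Big HA).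
  apply/(iso_Big HA); apply/range_cnt; apply/(H j); apply/range_cnt; exact/(iso_Big HA').
by rewrite -E in HA'; exact: iso_trans HA (iso_sym HA').
Qed.

Lemma rank_lt {R : nat -> bool} {x x'} : R x -> x < x' -> cnt R x < cnt R x'.
Proof.
move=> Rx lt; have := @cnt_mono R _ _ lt; rewrite cntS Rx; lia.
Qed.

Lemma rank_inj (R : nat -> bool) x x' : R x -> R x' -> cnt R x = cnt R x' -> x = x'.
Proof.
move=> Rx Rx' E; case: (ltngtP x x') => // H.
  by have := rank_lt Rx H; lia.
by have := rank_lt Rx' H; lia.
Qed.

Lemma exists_rank (R : nat -> bool) j : Big R j.+1 -> exists x, R x /\ cnt R x = j.
Proof.
case=> k; elim: k => [|k IH]; first by rewrite /cnt.
rewrite cntS => H; case: (leqP j.+1 (cnt R k)) => H2; first exact: IH.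
exists k; case: (R k) H => /=; lia.
Qed.

Lemma rank_Big {R : nat -> bool} {x} : R x -> Big R (cnt R x).+1.
Proof. by move=> Rx; exists x.+1; rewrite cntS Rx addn1. Qed.

Definition enumR (R : nat -> bool) j := epsilon (inhabits 0) (fun y => R y /\ cnt R y = j).

Lemma enumR_spec {R : nat -> bool} {j} : Big R j.+1 -> R (enumR R j) /\ cnt R (enumR R j) = j.
Proof. move=> H; apply: (epsilon_spec (inhabits 0) (fun y => R y /\ cnt R y = j)); exact: exists_rank H. Qed.

Definition Fb (P Q : nat -> bool) x :=
  if P x then enumR Q (cnt P x) else enumR (fun y => ~~ Q y) (cnt (fun y => ~~ P y) x).

Lemma Fb_spec {P Q : nat -> bool} : (forall j, Big P j <-> Big Q j) ->
  (forall j, Big (fun y => ~~ P y) j <-> Big (fun y => ~~ Q y) j) ->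
  forall x, Q (Fb P Q x) = P x /\
   (if P x then cnt Q (Fb P Q x) = cnt P x
    else cnt (fun y => ~~ Q y) (Fb P Q x) = cnt (fun y => ~~ P y) x).
Proof.
move=> H1 H2 x; rewrite /Fb; case: ifP => Px.
  have [] := enumR_spec ((H1 _).1 (rank_Big Px)) => -> ->; done.
have nPx : (fun y => ~~ P y) x by rewrite /= Px.
have [] := enumR_spec ((H2 _).1 (rank_Big nPx)) => /= /negbTE -> ->; done.
Qed.

Lemma Fb_can {P Q : nat -> bool} : (forall j, Big P j <-> Big Q j) ->
  (forall j, Big (fun y => ~~ P y) j <-> Big (fun y => ~~ Q y) j) ->
  cancel (Fb P Q) (Fb Q P).
Proof.
move=> H1 H2 x.
have H1' : forall j, Big Q j <-> Big P j by move=> j; split; apply H1.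
have H2' : forall j, Big (fun y => ~~ Q y) j <-> Big (fun y => ~~ P y) j
  by move=> j; split; apply H2.
have [E1 E2] := Fb_spec H1 H2 x.
have [E3 E4] := Fb_spec H1' H2' (Fb P Q x).
rewrite E1 in E4.
case: (boolP (P x)) => Px.
  rewrite Px in E2 E4.
  by apply: (rank_inj P) => //; [rewrite E3 E1 | rewrite E4 E2].
rewrite (negbTE Px) in E2 E4.
apply: (rank_inj (fun y => ~~ P y)) => /=; [by rewrite E3 E1 | by [] | by rewrite E4 E2].
Qed.

Lemma arity2 (i : 'I_(size sig2)) : nth 0 sig2 i = 1.
Proof. by case: i => [[|]]. Qed.

Lemma iso_mkU P Q : (forall j, Big P j <-> Big Q j) ->
  (forall j, Big (fun y => ~~ P y) j <-> Big (fun y => ~~ Q y) j) ->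
  iso (mkU P) (mkU Q).
Proof.
move=> H1 H2.
have H1' : forall j, Big Q j <-> Big P j by move=> j; split; apply H1.
have H2' : forall j, Big (fun y => ~~ Q y) j <-> Big (fun y => ~~ P y) j
  by move=> j; split; apply H2.
exists (Fb P Q), (Fb Q P); split; first exact: Fb_can.
split; first exact: Fb_can.
move=> i t; have st : size t = 1 by rewrite size_tuple arity2.
rewrite /mkU /= (nth_map 0) ?st //.
by case: (Fb_spec H1 H2 (nth 0 t 0)) => ->.
Qed.

Lemma agree_mkU m P Q : (forall x, x < m -> P x = Q x) -> agree_below m (mkU P) (mkU Q).
Proof.
move=> H i t /allP Ht; have st : size t = 1 by rewrite size_tuple arity2.
apply: H; apply: Ht; apply: mem_nth; by rewrite st.
Qed.

Definition Ds (s : seq bool) := mkU (fun x => nth false s x).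

Lemma Big_Ds s j : Big (fun x => nth false s x) j <-> j <= count id s.
Proof.
have Hc : cnt (fun x => nth false s x) (size s) = count id s.
  have -> : count id s = count id (mkseq (nth false s) (size s)) by rewrite mkseq_nth.
  rewrite /cnt /mkseq count_map; exact: eq_count.
have Hb : forall x, nth false s x -> x < size s.
  move=> x; apply: contraTT; rewrite -leqNgt => H; by rewrite nth_default.
split.
  case=> k Hk; apply: leq_trans Hk _; rewrite -Hc; exact: bnd_cnt.
by move=> H; exists (size s); rewrite Hc.
Qed.

Lemma Big_nDs s j : Big (fun x => ~~ nth false s x) j.
Proof.
apply: inf_Big => N; exists (maxn N (size s)); split; first exact: leq_maxl.
by rewrite nth_default // leq_maxr.
Qed.

Lemma Big_nlt n j : Big (fun x => ~~ (x < n)) j.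
Proof. apply: inf_Big => N; exists (maxn N n); split; first exact: leq_maxl. rewrite -leqNgt; exact: leq_maxr. Qed.

Lemma Big_nodd j : Big (fun x => ~~ odd x) j.
Proof. apply: inf_Big => N; exists N.*2; rewrite odd_double; split => //; lia. Qed.

Lemma LD_Ds s : LD K2 (Ds s).
Proof.
exists (U (count id s)); split; first by right; exists (count id s).
apply: iso_mkU => j; last by split => _; [exact: Big_nlt | exact: Big_nDs].
by rewrite Big_Ds Big_lt.
Qed.

Lemma nonisoDs s : ~ iso (Ds s) Uw.
Proof.
move=> H; have := (iso_Big H (count id s).+1).2 (Big_odd _).
by move/Big_Ds; rewrite ltnn.
Qed.

Lemma K2_notE0 : ~ learnable E0 K2.
Proof.
case=> G [Hc HG].
have LUw : LD K2 Uw by exists Uw; split; [left | exact: iso_refl].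
pose next (s : seq bool) a := s ++ nseq a.+1 false ++ [:: true].
pose Pr s (p : nat * nat) := size s <= p.2 /\ forall S', LD K2 S' ->
  agree_below (size (next s p.1)) (Ds (next s p.1)) S' -> G S' p.2 <> G Uw p.2.
have step : forall s, exists p, Pr s p.
  move=> s.
  have nE : ~ E0 (G (Ds s)) (G Uw) by move/(HG _ _ (LD_Ds s) LUw); exact: nonisoDs.
  have [n [Hn Hneq]] : exists n, size s <= n /\ G (Ds s) n <> G Uw n.
    apply: NNPP => H; apply: nE; exists (size s) => n Hn; apply: NNPP => H'; apply: H; by exists n.
  case: (Hc _ (LD_Ds s) n.+1) => L HL.
  exists (L, n); split => // S' LS' Hag.
  have H1 : agree_below L (Ds s) (Ds (next s L)).
    apply: agree_mkU => x Hx; rewrite /next nth_cat; case: ltnP => // H.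
    rewrite nth_default // nth_cat size_nseq.
    have -> : x - size s < L.+1 by lia.
    by rewrite nth_nseq; case: ifP.
  have H2 : agree_below L (Ds (next s L)) S'.
    apply: (agree_le _ _ _ _ _ Hag); rewrite /next /= size_cat /= size_cat size_nseq; lia.
  rewrite /= -(HL S' LS' (agree_trans _ _ _ _ H1 H2) n (ltnSn n)); exact: Hneq.
pose st s := epsilon (inhabits (0, 0)) (Pr s).
have Hst : forall s, Pr s (st s) := fun s => epsilon_spec _ _ (step s).
pose sq := fix sq k := if k is k'.+1 then next (sq k') (st (sq k')).1 else [::].
have sqS : forall k, sq k.+1 = next (sq k) (st (sq k)).1 by [].
have pre : forall k j, k <= j -> exists r, sq j = sq k ++ r.
  move=> k; elim=> [|j IH] le.
    have -> : k = 0 by lia.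
    by exists [::]; rewrite cats0.
  case: (leqP k j) => H.
    case: (IH H) => r Hr; exists (r ++ nseq (st (sq j)).1.+1 false ++ [:: true]).
    by rewrite sqS /next Hr -catA.
  have -> : k = j.+1 by lia.
  by exists [::]; rewrite cats0.
have szk : forall k, k <= size (sq k).
  elim=> // k IH; rewrite sqS /next !size_cat size_nseq; lia.
have nthsq : forall k j x, k <= j -> x < size (sq k) -> nth false (sq j) x = nth false (sq k) x.
  move=> k j x le Hx; case: (pre k j le) => r ->; by rewrite nth_cat Hx.
pose Sl := mkU (fun x => nth false (sq x.+1) x).
have agSl : forall k, agree_below (size (sq k)) (Ds (sq k)) Sl.
  move=> k; apply: agree_mkU => x Hx.
  have E1 := nthsq k (maxn k x.+1) x (leq_maxl _ _) Hx.
  have E2 := nthsq x.+1 (maxn k x.+1) x (leq_maxr _ _) (szk x.+1).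
  by rewrite -E1 E2.
have isoSl : iso Sl Uw.
  apply: iso_mkU => j; split => _; try exact: Big_odd; try exact: Big_nodd;
  apply: inf_Big => N; set a := (st (sq N)).1;
  have E : sq N.+1 = sq N ++ (nseq a.+1 false ++ [:: true]) by [];
  have szN := szk N.
    exists (size (sq N) + a.+1); split; first lia.
    rewrite (nthsq N.+1); last by rewrite E !size_cat size_nseq /=; lia.
      by rewrite E nth_cat ltnNge leq_addr addKn nth_cat size_nseq ltnn subnn.
    lia.
  exists (size (sq N)); split; first exact: szk.
  rewrite (nthsq N.+1); last by rewrite E !size_cat size_nseq /=; lia.
    by rewrite E nth_cat ltnn subnn.
  lia.
have LSl : LD K2 Sl by exists Uw; split; [left | exact: isoSl].
case: ((HG _ _ LSl LUw).1 isoSl) => m Hm.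
case: (Hst (sq m)) => Hsz Hp.
apply: (Hp Sl LSl (agSl m.+1)); apply: Hm.
have := szk m; lia.
Qed.

Theorem mainTheorem8 :
  (exists (sig : signature) (K : structure sig -> Prop),
      is_family K /\ learnable E0 K /\ ~ learnable Erange K) /\
  (exists (sig : signature) (K : structure sig -> Prop),
      is_family K /\ learnable Erange K /\ ~ learnable E0 K).
Proof.
split.
  exists sig1, K1; split; [exact: K1_family | split; [exact: K1_learn | exact: K1_notErange]].
exists sig2, K2; split; [exact: K2_family | split; [exact: K2_learn | exact: K2_notE0]].
Qed.
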